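(* The Lack model structure on $2\mathrm{Cat}$ is right-induced along $\mathbb{H}\colon 2\mathrm{Cat}\to\mathrm{DblCat}$ (from the adjunction $L\dashv\mathbb{H}$) from the model structure on $\mathrm{DblCat}$ right-induced along $(\mathbf{H},\mathcal{V})$ from two copies of the Lack model structure. That is, a 2-functor $F\colon\mathcal{A}\to\mathcal{B}$ is a biequivalence (resp.\ Lack fibration) if and only if $\mathbb{H}F\colon\mathbb{H}\mathcal{A}\to\mathbb{H}\mathcal{B}$ is a weak equivalence (resp.\ fibration) in $\mathrm{DblCat}$, i.e.\ a double biequivalence (resp.\ double fibration).
   Context: $\mathbb{H}\colon 2\mathrm{Cat}\to\mathrm{DblCat}$ sends a 2-category to the double category with the same objects, its morphisms as horizontal morphisms, only identity vertical morphisms, and its 2-cells as squares; it has a left adjoint $L$. $\mathbf{H}$ sends a double category to its underlying horizontal 2-category (objects, horizontal morphisms, squares with identity vertical boundaries as 2-cells). $\mathcal{V}\mathbb{A}$ is the 2-category with vertical morphisms as objects, squares as morphisms, and as 2-cells from $\alpha\colon(u\,{}^{a}_{b}\,v)$ to $\beta\colon(u\,{}^{c}_{d}\,v)$ pairs of squares with identity vertical boundaries $\sigma_0\colon a\Rightarrow c$, $\sigma_1\colon b\Rightarrow d$ with $\sigma_0$ on top of $\beta$ equal to $\alpha$ on top of $\sigma_1$. A biequivalence is a 2-functor essentially surjective up to equivalence on objects, essentially full up to invertible 2-cell on morphisms and fully faithful on 2-cells; a Lack fibration is a 2-functor $G$ for which equivalences $b\colon B\to GC$ lift to equivalences $a$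 with $Ga=b$, and invertible 2-cells $\beta\colon b\cong Gc$ lift to invertible 2-cells $\alpha\colon a\cong c$ with $G\alpha=\beta$. The Lack model structure on $2\mathrm{Cat}$ has these as weak equivalences and fibrations. The model structure on $\mathrm{DblCat}$ has as weak equivalences (resp.\ fibrations) the double functors $F$ with $\mathbf{H}F$ and $\mathcal{V}F$ biequivalences (resp.\ Lack fibrations); these are called double biequivalences (resp.\ double fibrations). *)

(* Defs.v *)
(* Strict 2-categories and strict double categories, encoded
   "single-sorted per dimension": each kind of cell forms one type, with
   boundary maps, and composition takes a proof that the arguments are
   composable.  Axioms quantify over all such proofs. *)
From Stdlib Require Import ProofIrrelevance.

(** * Strict 2-categories *)

Record TwoCatData := {
  ob : Type; mor : Type; cell : Type;
  s1 : mor -> ob; t1 : mor -> ob; id1 : ob -> mor;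
  (* c1 f g = "f then g" (diagrammatic order) *)
  c1 : forall f g : mor, t1 f = s1 g -> mor;
  s2 : cell -> mor; t2 : cell -> mor; id2 : mor -> cell;
  v2 : forall a b : cell, t2 a = s2 b -> cell;
  h2 : forall a b : cell, t1 (s2 a) = s1 (s2 b) -> cell }.

Arguments s1 {_} _. Arguments t1 {_} _. Arguments id1 {_} _.
Arguments c1 {_} _ _ _. Arguments s2 {_} _. Arguments t2 {_} _.
Arguments id2 {_} _. Arguments v2 {_} _ _ _. Arguments h2 {_} _ _ _.

Record is_2cat (C : TwoCatData) : Prop := {
  ax_id1_s : forall x : ob C, s1 (id1 x) = x;
  ax_id1_t : forall x : ob C, t1 (id1 x) = x;
  ax_c1_s : forall (f g : mor C) p, s1 (c1 f g p) = s1 f;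
  ax_c1_t : forall (f g : mor C) p, t1 (c1 f g p) = t1 g;
  ax_c1_idl : forall (f : mor C) p, c1 (id1 (s1 f)) f p = f;
  ax_c1_idr : forall (f : mor C) p, c1 f (id1 (t1 f)) p = f;
  ax_c1_assoc : forall (f g h : mor C) p q r r',
      c1 (c1 f g p) h r = c1 f (c1 g h q) r';
  ax_par_s : forall a : cell C, s1 (s2 a) = s1 (t2 a);
  ax_par_t : forall a : cell C, t1 (s2 a) = t1 (t2 a);
  ax_id2_s : forall f : mor C, s2 (id2 f) = f;
  ax_id2_t : forall f : mor C, t2 (id2 f) = f;
  ax_v2_s : forall (a b : cell C) p, s2 (v2 a b p) = s2 a;
  ax_v2_t : forall (a b : cell C) p, t2 (v2 a b p) = t2 b;
  ax_v2_idl : forall (a : cell C) p, v2 (id2 (s2 a)) a p = a;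
  ax_v2_idr : forall (a : cell C) p, v2 a (id2 (t2 a)) p = a;
  ax_v2_assoc : forall (a b c : cell C) p q r r',
      v2 (v2 a b p) c r = v2 a (v2 b c q) r';
  ax_h2_s : forall (a b : cell C) p q, s2 (h2 a b p) = c1 (s2 a) (s2 b) q;
  ax_h2_t : forall (a b : cell C) p q, t2 (h2 a b p) = c1 (t2 a) (t2 b) q;
  ax_h2_idl : forall (a : cell C) p, h2 (id2 (id1 (s1 (s2 a)))) a p = a;
  ax_h2_idr : forall (a : cell C) p, h2 a (id2 (id1 (t1 (s2 a)))) p = a;
  ax_h2_assoc : forall (a b c : cell C) p q r r',
      h2 (h2 a b p) c r = h2 a (h2 b c q) r';
  ax_h2_id2 : forall (f g : mor C) p q, h2 (id2 f) (id2 g) p = id2 (c1 f g q);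
  ax_interchange : forall (a b c d : cell C) p q r r1 r2 r3,
      h2 (v2 a b p) (v2 c d q) r = v2 (h2 a c r1) (h2 b d r2) r3 }.

Record TwoFunctorData (A B : TwoCatData) := {
  F0 : ob A -> ob B; F1 : mor A -> mor B; F2 : cell A -> cell B }.
Arguments F0 {_ _} _ _. Arguments F1 {_ _} _ _. Arguments F2 {_ _} _ _.

Record is_2functor {A B : TwoCatData} (F : TwoFunctorData A B) : Prop := {
  fax_s1 : forall f, s1 (F1 F f) = F0 F (s1 f);
  fax_t1 : forall f, t1 (F1 F f) = F0 F (t1 f);
  fax_id1 : forall x, F1 F (id1 x) = id1 (F0 F x);
  fax_c1 : forall f g p q, F1 F (c1 f g p) = c1 (F1 F f) (F1 F g) q;
  fax_s2 : forall a, s2 (F2 F a) = F1 F (s2 a);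
  fax_t2 : forall a, t2 (F2 F a) = F1 F (t2 a);
  fax_id2 : forall f, F2 F (id2 f) = id2 (F1 F f);
  fax_v2 : forall a b p q, F2 F (v2 a b p) = v2 (F2 F a) (F2 F b) q;
  fax_h2 : forall a b p q, F2 F (h2 a b p) = h2 (F2 F a) (F2 F b) q }.

Definition inv2 {C : TwoCatData} (a : cell C) : Prop :=
  exists (b : cell C) (p : t2 a = s2 b) (q : t2 b = s2 a),
    v2 a b p = id2 (s2 a) /\ v2 b a q = id2 (t2 a).

Definition iso2 {C : TwoCatData} (f g : mor C) : Prop :=
  exists a : cell C, s2 a = f /\ t2 a = g /\ inv2 a.

Definition is_equiv {C : TwoCatData} (f : mor C) : Prop :=
  exists (g : mor C) (p : t1 f = s1 g) (q : t1 g = s1 f),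
    iso2 (id1 (s1 f)) (c1 f g p) /\ iso2 (c1 g f q) (id1 (t1 f)).

Definition biequivalence {A B : TwoCatData} (F : TwoFunctorData A B) : Prop :=
  (forall y : ob B, exists (x : ob A) (f : mor B),
      s1 f = F0 F x /\ t1 f = y /\ is_equiv f) /\
  (forall (x x' : ob A) (g : mor B), s1 g = F0 F x -> t1 g = F0 F x' ->
      exists f : mor A, s1 f = x /\ t1 f = x' /\ iso2 (F1 F f) g) /\
  (forall f f' : mor A, s1 f = s1 f' -> t1 f = t1 f' ->
     forall b : cell B, s2 b = F1 F f -> t2 b = F1 F f' ->
       exists! a : cell A, s2 a = f /\ t2 a = f' /\ F2 F a = b).

Definition lack_fibration {A B : TwoCatData} (G : TwoFunctorData A B) : Prop :=
  (forall (c : ob A) (b : mor B), t1 b = F0 G c -> is_equiv b ->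
      exists a : mor A, t1 a = c /\ is_equiv a /\ F1 G a = b) /\
  (forall (c : mor A) (be : cell B), t2 be = F1 G c -> inv2 be ->
      exists al : cell A, t2 al = c /\ inv2 al /\ F2 G al = be).

(** * Strict double categories *)

Record DblCatData := {
  dob : Type; hmor : Type; vmor : Type; sq : Type;
  hs : hmor -> dob; ht : hmor -> dob; hid : dob -> hmor;
  hc : forall a b : hmor, ht a = hs b -> hmor;
  vs : vmor -> dob; vt : vmor -> dob; vid : dob -> vmor;
  vc : forall u v : vmor, vt u = vs v -> vmor;
  (* a square  u ^a_b v : left u, right v, top a, bottom b *)
  sqL : sq -> vmor; sqR : sq -> vmor; sqT : sq -> hmor; sqB : sq -> hmor;
  sqh : forall al be : sq, sqR al = sqL be -> sq;
  sqv : forall al be : sq, sqB al = sqT be -> sq;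
  idh : vmor -> sq;
  idv : hmor -> sq }.

Arguments hs {_} _. Arguments ht {_} _. Arguments hid {_} _. Arguments hc {_} _ _ _.
Arguments vs {_} _. Arguments vt {_} _. Arguments vid {_} _. Arguments vc {_} _ _ _.
Arguments sqL {_} _. Arguments sqR {_} _. Arguments sqT {_} _. Arguments sqB {_} _.
Arguments sqh {_} _ _ _. Arguments sqv {_} _ _ _. Arguments idh {_} _. Arguments idv {_} _.

Record is_dblcat (D : DblCatData) : Prop := {
  dax_hid_s : forall x : dob D, hs (hid x) = x;
  dax_hid_t : forall x : dob D, ht (hid x) = x;
  dax_hc_s : forall (a b : hmor D) p, hs (hc a b p) = hs a;
  dax_hc_t : forall (a b : hmor D) p, ht (hc a b p) = ht b;
  dax_hc_idl : forall (a : hmor D) p, hc (hid (hs a)) a p = a;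
  dax_hc_idr : forall (a : hmor D) p, hc a (hid (ht a)) p = a;
  dax_hc_assoc : forall (a b c : hmor D) p q r r', hc (hc a b p) c r = hc a (hc b c q) r';
  dax_vid_s : forall x : dob D, vs (vid x) = x;
  dax_vid_t : forall x : dob D, vt (vid x) = x;
  dax_vc_s : forall (u v : vmor D) p, vs (vc u v p) = vs u;
  dax_vc_t : forall (u v : vmor D) p, vt (vc u v p) = vt v;
  dax_vc_idl : forall (u : vmor D) p, vc (vid (vs u)) u p = u;
  dax_vc_idr : forall (u : vmor D) p, vc u (vid (vt u)) p = u;
  dax_vc_assoc : forall (u v w : vmor D) p q r r', vc (vc u v p) w r = vc u (vc v w q) r';
  dax_TL : forall a : sq D, hs (sqT a) = vs (sqL a);
  dax_TR : forall a : sq D, ht (sqT a) = vs (sqR a);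
  dax_BL : forall a : sq D, hs (sqB a) = vt (sqL a);
  dax_BR : forall a : sq D, ht (sqB a) = vt (sqR a);
  dax_sqh_L : forall (a b : sq D) p, sqL (sqh a b p) = sqL a;
  dax_sqh_R : forall (a b : sq D) p, sqR (sqh a b p) = sqR b;
  dax_sqh_T : forall (a b : sq D) p q, sqT (sqh a b p) = hc (sqT a) (sqT b) q;
  dax_sqh_B : forall (a b : sq D) p q, sqB (sqh a b p) = hc (sqB a) (sqB b) q;
  dax_sqv_T : forall (a b : sq D) p, sqT (sqv a b p) = sqT a;
  dax_sqv_B : forall (a b : sq D) p, sqB (sqv a b p) = sqB b;
  dax_sqv_L : forall (a b : sq D) p q, sqL (sqv a b p) = vc (sqL a) (sqL b) q;
  dax_sqv_R : forall (a b : sq D) p q, sqR (sqv a b p) = vc (sqR a) (sqR b) q;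
  dax_idh_L : forall u : vmor D, sqL (idh u) = u;
  dax_idh_R : forall u : vmor D, sqR (idh u) = u;
  dax_idh_T : forall u : vmor D, sqT (idh u) = hid (vs u);
  dax_idh_B : forall u : vmor D, sqB (idh u) = hid (vt u);
  dax_idv_T : forall a : hmor D, sqT (idv a) = a;
  dax_idv_B : forall a : hmor D, sqB (idv a) = a;
  dax_idv_L : forall a : hmor D, sqL (idv a) = vid (hs a);
  dax_idv_R : forall a : hmor D, sqR (idv a) = vid (ht a);
  dax_sqh_idl : forall (a : sq D) p, sqh (idh (sqL a)) a p = a;
  dax_sqh_idr : forall (a : sq D) p, sqh a (idh (sqR a)) p = a;
  dax_sqh_assoc : forall (a b c : sq D) p q r r', sqh (sqh a b p) c r = sqh a (sqh b c q) r';
  dax_sqv_idl : forall (a : sq D) p, sqv (idv (sqT a)) a p = a;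
  dax_sqv_idr : forall (a : sq D) p, sqv a (idv (sqB a)) p = a;
  dax_sqv_assoc : forall (a b c : sq D) p q r r', sqv (sqv a b p) c r = sqv a (sqv b c q) r';
  dax_idh_vc : forall (u v : vmor D) p q, idh (vc u v p) = sqv (idh u) (idh v) q;
  dax_idv_hc : forall (a b : hmor D) p q, idv (hc a b p) = sqh (idv a) (idv b) q;
  dax_idh_vid : forall x : dob D, idh (vid x) = idv (hid x);
  dax_interchange : forall (a b c d : sq D) p q r r1 r2 r3,
      sqh (sqv a b p) (sqv c d q) r = sqv (sqh a c r1) (sqh b d r2) r3 }.

Record DblFunctorData (D E : DblCatData) := {
  G0 : dob D -> dob E; Gh : hmor D -> hmor E; Gv : vmor D -> vmor E; Gs : sq D -> sq E }.
Arguments G0 {_ _} _ _. Arguments Gh {_ _} _ _. Arguments Gv {_ _} _ _. Arguments Gs {_ _} _ _.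

Record is_dblfunctor {D E : DblCatData} (G : DblFunctorData D E) : Prop := {
  gax_hs : forall a, hs (Gh G a) = G0 G (hs a);
  gax_ht : forall a, ht (Gh G a) = G0 G (ht a);
  gax_hid : forall x, Gh G (hid x) = hid (G0 G x);
  gax_hc : forall a b p q, Gh G (hc a b p) = hc (Gh G a) (Gh G b) q;
  gax_vs : forall u, vs (Gv G u) = G0 G (vs u);
  gax_vt : forall u, vt (Gv G u) = G0 G (vt u);
  gax_vid : forall x, Gv G (vid x) = vid (G0 G x);
  gax_vc : forall u v p q, Gv G (vc u v p) = vc (Gv G u) (Gv G v) q;
  gax_L : forall a, sqL (Gs G a) = Gv G (sqL a);
  gax_R : forall a, sqR (Gs G a) = Gv G (sqR a);
  gax_T : forall a, sqT (Gs G a) = Gh G (sqT a);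
  gax_B : forall a, sqB (Gs G a) = Gh G (sqB a);
  gax_sqh : forall a b p q, Gs G (sqh a b p) = sqh (Gs G a) (Gs G b) q;
  gax_sqv : forall a b p q, Gs G (sqv a b p) = sqv (Gs G a) (Gs G b) q;
  gax_idh : forall u, Gs G (idh u) = idh (Gv G u);
  gax_idv : forall a, Gs G (idv a) = idv (Gh G a) }.

(* Vertical morphisms of HH A are only identities: we represent the identity
   at x by x itself. *)

Definition HH (A : TwoCatData) : DblCatData := {|
  dob := ob A; hmor := mor A; vmor := ob A; sq := cell A;
  hs := @s1 A; ht := @t1 A; hid := @id1 A; hc := @c1 A;
  vs := fun x => x; vt := fun x => x; vid := fun x => x; vc := fun u v _ => u;
  sqL := fun a => s1 (s2 a); sqR := fun a => t1 (s2 a);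
  sqT := @s2 A; sqB := @t2 A;
  sqh := @h2 A; sqv := @v2 A;
  idh := fun x => id2 (id1 x); idv := @id2 A |}.

Lemma v2_pi (C : TwoCatData) (a a' b b' : cell C) p p' :
  a = a' -> b = b' -> v2 a b p = v2 a' b' p'.
Proof. intros -> ->. f_equal. apply proof_irrelevance. Qed.
Lemma h2_pi (C : TwoCatData) (a a' b b' : cell C) p p' :
  a = a' -> b = b' -> h2 a b p = h2 a' b' p'.
Proof. intros -> ->. f_equal. apply proof_irrelevance. Qed.

Lemma HH_is_dblcat {A : TwoCatData} (HA : is_2cat A) : is_dblcat (HH A).
Proof.
  destruct HA; constructor; simpl; intros.
  all: try (solve [eauto]); try congruence.
  - rewrite (ax_h2_s0 a b p p). apply ax_c1_s0.
  - rewrite (ax_h2_s0 a b p p). apply ax_c1_t0.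
  - subst v. symmetry.
    assert (E : forall a b p, a = id2 (s2 b) -> v2 a b p = b)
      by (intros a b p0 ->; apply ax_v2_idl0).
    apply E. rewrite ax_id2_s0. reflexivity.
Qed.

Definition HHF {A B : TwoCatData} (F : TwoFunctorData A B) :
  DblFunctorData (HH A) (HH B) :=
  Build_DblFunctorData (HH A) (HH B) (F0 F) (F1 F) (F0 F) (F2 F).

Lemma HHF_is_dblfunctor {A B : TwoCatData} {F : TwoFunctorData A B}
  (HF : is_2functor F) : is_dblfunctor (HHF F).
Proof.
  constructor; simpl; intros; try (destruct HF; solve [eauto]).
  - rewrite (fax_s2 _ HF), (fax_s1 _ HF). reflexivity.
  - rewrite (fax_s2 _ HF), (fax_t1 _ HF). reflexivity.
  - rewrite (fax_id2 _ HF), (fax_id1 _ HF). reflexivity.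
Qed.

Section DblLemmas.
Context {D : DblCatData} (HD : is_dblcat D).

Lemma sqv_pi (a a' b b' : sq D) p p' : a = a' -> b = b' -> sqv a b p = sqv a' b' p'.
Proof. intros -> ->. f_equal. apply proof_irrelevance. Qed.
Lemma sqh_pi (a a' b b' : sq D) p p' : a = a' -> b = b' -> sqh a b p = sqh a' b' p'.
Proof. intros -> ->. f_equal. apply proof_irrelevance. Qed.

Lemma vc_vid_vid (x y : dob D) p : vc (vid x) (vid y) p = vid x.
Proof.
  assert (Exy : x = y).
  { rewrite <- (dax_vid_t _ HD x), p. apply (dax_vid_s _ HD). }
  subst y.
  assert (E : forall u v q, u = vid (vs v) -> vc u v q = v)
    by (intros u v q ->; apply (dax_vc_idl _ HD)).
  apply E. rewrite (dax_vid_s _ HD). reflexivity.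
Qed.

Lemma sqv_idl' (a b : sq D) p : a = idv (sqT b) -> sqv a b p = b.
Proof. intros ->. apply (dax_sqv_idl _ HD). Qed.
Lemma sqv_idr' (a b : sq D) p : b = idv (sqB a) -> sqv a b p = a.
Proof. intros ->. apply (dax_sqv_idr _ HD). Qed.
End DblLemmas.

Definition is_glob {D : DblCatData} (a : sq D) : Prop :=
  sqL a = vid (hs (sqT a)) /\ sqR a = vid (ht (sqT a)).

Definition gsq (D : DblCatData) := { a : sq D | is_glob a }.

Section HConstr.
Context {D : DblCatData} (HD : is_dblcat D).

Lemma glob_idv (f : hmor D) : is_glob (idv f).
Proof.
  unfold is_glob. rewrite (dax_idv_T _ HD), (dax_idv_L _ HD), (dax_idv_R _ HD). split; reflexivity.
Qed.

Definition gsq_id (f : hmor D) : gsq D := exist _ (idv f) (glob_idv f).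

Lemma glob_sqv (a b : gsq D) (p : sqB (proj1_sig a) = sqT (proj1_sig b)) :
  is_glob (sqv (proj1_sig a) (proj1_sig b) p).
Proof.
  destruct a as [a [aL aR]], b as [b [bL bR]]; simpl in *.
  unfold is_glob. rewrite (dax_sqv_T _ HD).
  assert (q1 : vt (sqL a) = vs (sqL b))
    by (rewrite <- (dax_BL _ HD), <- (dax_TL _ HD); congruence).
  assert (q2 : vt (sqR a) = vs (sqR b))
    by (rewrite <- (dax_BR _ HD), <- (dax_TR _ HD); congruence).
  rewrite (dax_sqv_L _ HD _ _ _ q1), (dax_sqv_R _ HD _ _ _ q2).
  split.
  - revert q1. rewrite aL, bL. intro q1. apply (vc_vid_vid HD).
  - revert q2. rewrite aR, bR. intro q2. apply (vc_vid_vid HD).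
Qed.

Definition gsq_vcomp (a b : gsq D) (p : sqB (proj1_sig a) = sqT (proj1_sig b)) : gsq D :=
  exist _ _ (glob_sqv a b p).

Lemma glob_hcomp_ok (a b : gsq D) (p : ht (sqT (proj1_sig a)) = hs (sqT (proj1_sig b))) :
  sqR (proj1_sig a) = sqL (proj1_sig b).
Proof.
  destruct a as [a [aL aR]], b as [b [bL bR]]; simpl in *. congruence.
Qed.

Lemma glob_sqh (a b : gsq D) p :
  is_glob (sqh (proj1_sig a) (proj1_sig b) (glob_hcomp_ok a b p)).
Proof.
  pose proof (glob_hcomp_ok a b p) as E.
  destruct a as [a [aL aR]], b as [b [bL bR]]; simpl in *.
  unfold is_glob. rewrite (dax_sqh_L _ HD), (dax_sqh_R _ HD), (dax_sqh_T _ HD _ _ _ p).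
  rewrite (dax_hc_s _ HD), (dax_hc_t _ HD). split; assumption.
Qed.

Definition gsq_hcomp (a b : gsq D) p : gsq D := exist _ _ (glob_sqh a b p).

End HConstr.

Definition Hc {D : DblCatData} (HD : is_dblcat D) : TwoCatData := {|
  ob := dob D; mor := hmor D; cell := gsq D;
  s1 := @hs D; t1 := @ht D; id1 := @hid D; c1 := @hc D;
  s2 := fun a => sqT (proj1_sig a); t2 := fun a => sqB (proj1_sig a);
  id2 := gsq_id HD; v2 := gsq_vcomp HD; h2 := gsq_hcomp HD |}.

Section HFunConstr.
Context {D E : DblCatData} (HD : is_dblcat D) (HE : is_dblcat E)
        {G : DblFunctorData D E} (HG : is_dblfunctor G).

Lemma glob_G (a : gsq D) : is_glob (Gs G (proj1_sig a)).
Proof.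
  destruct a as [a [aL aR]]; simpl. unfold is_glob.
  rewrite (gax_L _ HG), (gax_R _ HG), (gax_T _ HG), aL, aR,
    (gax_vid _ HG), (gax_vid _ HG), (gax_hs _ HG), (gax_ht _ HG).
  split; reflexivity.
Qed.

Definition gsq_map (a : gsq D) : gsq E := exist _ _ (glob_G a).
End HFunConstr.

Definition HFun {D E : DblCatData} (HD : is_dblcat D) (HE : is_dblcat E)
  {G : DblFunctorData D E} (HG : is_dblfunctor G) : TwoFunctorData (Hc HD) (Hc HE) :=
  Build_TwoFunctorData (Hc HD) (Hc HE) (G0 G) (Gh G) (gsq_map HG).

(** * The 2-category  V D : objects = vertical morphisms, morphisms = squares,
    2-cells from al : (u ^a_b v) to be : (u ^c_d v) are pairs of globular
    squares sg0 : a => c, sg1 : b => d with  sg0 ; be = al ; sg1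
    (";" = vertical composition of squares, sg0 on top of be). *)

Record vcell (D : DblCatData) := {
  vsrc : sq D; vtgt : sq D; sg0 : gsq D; sg1 : gsq D;
  vcL : sqL vsrc = sqL vtgt;
  vcR : sqR vsrc = sqR vtgt;
  vc0T : sqT (proj1_sig sg0) = sqT vsrc;
  vc0B : sqB (proj1_sig sg0) = sqT vtgt;
  vc1T : sqT (proj1_sig sg1) = sqB vsrc;
  vc1B : sqB (proj1_sig sg1) = sqB vtgt;
  vceq : forall p q, sqv (proj1_sig sg0) vtgt p = sqv vsrc (proj1_sig sg1) q }.
Arguments vsrc {_} _. Arguments vtgt {_} _. Arguments sg0 {_} _. Arguments sg1 {_} _.
Arguments vcL {_} _. Arguments vcR {_} _. Arguments vc0T {_} _. Arguments vc0B {_} _.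
Arguments vc1T {_} _. Arguments vc1B {_} _. Arguments vceq {_} _ _ _.

Section VConstr.
Context {D : DblCatData} (HD : is_dblcat D).

Lemma hc_pi (a a' b b' : hmor D) p p' : a = a' -> b = b' -> hc a b p = hc a' b' p'.
Proof. intros -> ->. f_equal. apply proof_irrelevance. Qed.

Lemma vc_vid_l (x : dob D) v q : vc (vid x) v q = v.
Proof.
  assert (Ex : x = vs v) by (rewrite <- q; symmetry; apply (dax_vid_t _ HD)).
  subst x. apply (dax_vc_idl _ HD).
Qed.
Lemma vc_vid_r (x : dob D) u q : vc u (vid x) q = u.
Proof.
  assert (Ex : x = vt u) by (rewrite q; symmetry; apply (dax_vid_s _ HD)).
  subst x. apply (dax_vc_idr _ HD).
Qed.

Lemma glob_hsB (s : sq D) : is_glob s -> hs (sqB s) = hs (sqT s).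
Proof. intros [sL sR]. rewrite (dax_BL _ HD), sL. apply (dax_vid_t _ HD). Qed.
Lemma glob_htB (s : sq D) : is_glob s -> ht (sqB s) = ht (sqT s).
Proof. intros [sL sR]. rewrite (dax_BR _ HD), sR. apply (dax_vid_t _ HD). Qed.

Lemma glob_top_L (s b : sq D) e : is_glob s -> sqL (sqv s b e) = sqL b.
Proof.
  intros Hs.
  assert (q : vt (sqL s) = vs (sqL b)).
  { rewrite <- (dax_BL _ HD), <- (dax_TL _ HD), e. reflexivity. }
  rewrite (dax_sqv_L _ HD _ _ _ q). revert q. destruct Hs as [-> _]. intro q.
  apply vc_vid_l.
Qed.
Lemma glob_top_R (s b : sq D) e : is_glob s -> sqR (sqv s b e) = sqR b.
Proof.
  intros Hs.
  assert (q : vt (sqR s) = vs (sqR b)).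
  { rewrite <- (dax_BR _ HD), <- (dax_TR _ HD), e. reflexivity. }
  rewrite (dax_sqv_R _ HD _ _ _ q). revert q. destruct Hs as [_ ->]. intro q.
  apply vc_vid_l.
Qed.
Lemma glob_bot_L (a s : sq D) e : is_glob s -> sqL (sqv a s e) = sqL a.
Proof.
  intros Hs.
  assert (q : vt (sqL a) = vs (sqL s)).
  { rewrite <- (dax_BL _ HD), <- (dax_TL _ HD), e. reflexivity. }
  rewrite (dax_sqv_L _ HD _ _ _ q). revert q. destruct Hs as [-> _]. intro q.
  apply vc_vid_r.
Qed.
Lemma glob_bot_R (a s : sq D) e : is_glob s -> sqR (sqv a s e) = sqR a.
Proof.
  intros Hs.
  assert (q : vt (sqR a) = vs (sqR s)).
  { rewrite <- (dax_BR _ HD), <- (dax_TR _ HD), e. reflexivity. }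
  rewrite (dax_sqv_R _ HD _ _ _ q). revert q. destruct Hs as [_ ->]. intro q.
  apply vc_vid_r.
Qed.

Definition vcell_id (al : sq D) : vcell D.
Proof.
  refine (Build_vcell D al al (gsq_id HD (sqT al)) (gsq_id HD (sqB al))
            eq_refl eq_refl _ _ _ _ _); simpl.
  - apply (dax_idv_T _ HD).
  - apply (dax_idv_B _ HD).
  - apply (dax_idv_T _ HD).
  - apply (dax_idv_B _ HD).
  - intros p q. rewrite (sqv_idl' HD), (sqv_idr' HD); reflexivity.
Defined.

Definition vcell_v (c d : vcell D) (p : vtgt c = vsrc d) : vcell D.
Proof.
  destruct c as [al be [s0 g0] [s1 g1] cL cR c0T c0B c1T c1B ceq];
  destruct d as [be' ga [t0 h0] [t1 h1] dL dR d0T d0B d1T d1B deq];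
  simpl in *. subst be'.
  assert (P0 : sqB s0 = sqT t0) by congruence.
  assert (P1 : sqB s1 = sqT t1) by congruence.
  refine (Build_vcell D al ga
            (gsq_vcomp HD (exist _ s0 g0) (exist _ t0 h0) P0)
            (gsq_vcomp HD (exist _ s1 g1) (exist _ t1 h1) P1) _ _ _ _ _ _ _); simpl.
  - congruence.
  - congruence.
  - rewrite (dax_sqv_T _ HD). assumption.
  - rewrite (dax_sqv_B _ HD). assumption.
  - rewrite (dax_sqv_T _ HD). assumption.
  - rewrite (dax_sqv_B _ HD). assumption.
  - intros p q.
    assert (r2 : sqB s0 = sqT (sqv t0 ga d0B)) by (rewrite (dax_sqv_T _ HD); congruence).
    rewrite (dax_sqv_assoc _ HD s0 t0 ga P0 d0B p r2).
    assert (r3 : sqB be = sqT t1) by congruence.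
    assert (r4 : sqB s0 = sqT (sqv be t1 r3)) by (rewrite (dax_sqv_T _ HD); congruence).
    transitivity (sqv s0 (sqv be t1 r3) r4).
    { apply sqv_pi; [reflexivity | apply deq]. }
    assert (r6 : sqB (sqv s0 be c0B) = sqT t1) by (rewrite (dax_sqv_B _ HD); congruence).
    rewrite <- (dax_sqv_assoc _ HD s0 be t1 c0B r3 r6 r4).
    assert (r7 : sqB al = sqT s1) by congruence.
    assert (r8 : sqB (sqv al s1 r7) = sqT t1) by (rewrite (dax_sqv_B _ HD); congruence).
    transitivity (sqv (sqv al s1 r7) t1 r8).
    { apply sqv_pi; [apply ceq | reflexivity]. }
    rewrite (dax_sqv_assoc _ HD al s1 t1 r7 P1 r8 q). reflexivity.
Defined.

Definition vcell_h (c d : vcell D) (p : sqR (vsrc c) = sqL (vsrc d)) : vcell D.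
Proof.
  destruct c as [al be [s0 g0] [s1 g1] cL cR c0T c0B c1T c1B ceq];
  destruct d as [al' be' [t0 h0] [t1 h1] dL dR d0T d0B d1T d1B deq];
  simpl in *.
  assert (p' : sqR be = sqL be') by congruence.
  assert (P0 : ht (sqT s0) = hs (sqT t0))
    by (rewrite c0T, d0T, (dax_TR _ HD), (dax_TL _ HD); congruence).
  assert (P1 : ht (sqT s1) = hs (sqT t1))
    by (rewrite c1T, d1T, (dax_BR _ HD), (dax_BL _ HD); congruence).
  refine (Build_vcell D (sqh al al' p) (sqh be be' p')
            (gsq_hcomp HD (exist _ s0 g0) (exist _ t0 h0) P0)
            (gsq_hcomp HD (exist _ s1 g1) (exist _ t1 h1) P1) _ _ _ _ _ _ _); simpl.
  - rewrite !(dax_sqh_L _ HD). assumption.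
  - rewrite !(dax_sqh_R _ HD). assumption.
  - assert (q : ht (sqT al) = hs (sqT al')) by congruence.
    rewrite (dax_sqh_T _ HD _ _ _ P0), (dax_sqh_T _ HD _ _ _ q).
    apply hc_pi; assumption.
  - assert (q1 : ht (sqB s0) = hs (sqB t0))
      by (rewrite (glob_htB _ g0), (glob_hsB _ h0); assumption).
    assert (q : ht (sqT be) = hs (sqT be')) by congruence.
    rewrite (dax_sqh_B _ HD _ _ _ q1), (dax_sqh_T _ HD _ _ _ q).
    apply hc_pi; assumption.
  - assert (q : ht (sqB al) = hs (sqB al')) by congruence.
    rewrite (dax_sqh_T _ HD _ _ _ P1), (dax_sqh_B _ HD _ _ _ q).
    apply hc_pi; assumption.
  - assert (q1 : ht (sqB s1) = hs (sqB t1))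
      by (rewrite (glob_htB _ g1), (glob_hsB _ h1); assumption).
    assert (q : ht (sqB be) = hs (sqB be')) by congruence.
    rewrite (dax_sqh_B _ HD _ _ _ q1), (dax_sqh_B _ HD _ _ _ q).
    apply hc_pi; assumption.
  - intros P Q.
    assert (R : sqR (sqv s0 be c0B) = sqL (sqv t0 be' d0B))
      by (rewrite (glob_top_R _ _ _ g0), (glob_top_L _ _ _ h0); assumption).
    transitivity (sqh (sqv s0 be c0B) (sqv t0 be' d0B) R).
    { symmetry. apply (dax_interchange _ HD). }
    assert (e3 : sqB al = sqT s1) by congruence.
    assert (e4 : sqB al' = sqT t1) by congruence.
    assert (R' : sqR (sqv al s1 e3) = sqL (sqv al' t1 e4))
      by (rewrite (glob_bot_R _ _ _ g1), (glob_bot_L _ _ _ h1); assumption).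
    transitivity (sqh (sqv al s1 e3) (sqv al' t1 e4) R').
    { apply sqh_pi; [apply ceq | apply deq]. }
    apply (dax_interchange _ HD).
Defined.

End VConstr.

Definition Vc {D : DblCatData} (HD : is_dblcat D) : TwoCatData := {|
  ob := vmor D; mor := sq D; cell := vcell D;
  s1 := @sqL D; t1 := @sqR D; id1 := @idh D; c1 := @sqh D;
  s2 := @vsrc D; t2 := @vtgt D; id2 := vcell_id HD;
  v2 := vcell_v HD; h2 := vcell_h HD |}.

Section VFunConstr.
Context {D E : DblCatData} (HD : is_dblcat D) (HE : is_dblcat E)
        {G : DblFunctorData D E} (HG : is_dblfunctor G).

Definition vcell_map (c : vcell D) : vcell E.
Proof.
  refine (Build_vcell E (Gs G (vsrc c)) (Gs G (vtgt c))
            (gsq_map HG (sg0 c)) (gsq_map HG (sg1 c)) _ _ _ _ _ _ _); simpl.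
  - rewrite !(gax_L _ HG), (vcL c). reflexivity.
  - rewrite !(gax_R _ HG), (vcR c). reflexivity.
  - rewrite !(gax_T _ HG), (vc0T c). reflexivity.
  - rewrite (gax_B _ HG), (gax_T _ HG), (vc0B c). reflexivity.
  - rewrite (gax_T _ HG), (gax_B _ HG), (vc1T c). reflexivity.
  - rewrite !(gax_B _ HG), (vc1B c). reflexivity.
  - intros p q.
    rewrite <- (gax_sqv _ HG _ _ (vc0B c) p), <- (gax_sqv _ HG _ _ (eq_sym (vc1T c)) q).
    f_equal. apply vceq.
Defined.
End VFunConstr.

Definition VFun {D E : DblCatData} (HD : is_dblcat D) (HE : is_dblcat E)
  {G : DblFunctorData D E} (HG : is_dblfunctor G) : TwoFunctorData (Vc HD) (Vc HE) :=
  Build_TwoFunctorData (Vc HD) (Vc HE) (Gv G) (Gs G) (vcell_map HG).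

Definition double_biequivalence {D E : DblCatData} (HD : is_dblcat D) (HE : is_dblcat E)
  {G : DblFunctorData D E} (HG : is_dblfunctor G) : Prop :=
  biequivalence (HFun HD HE HG) /\ biequivalence (VFun HD HE HG).

Definition double_fibration {D E : DblCatData} (HD : is_dblcat D) (HE : is_dblcat E)
  {G : DblFunctorData D E} (HG : is_dblfunctor G) : Prop :=
  lack_fibration (HFun HD HE HG) /\ lack_fibration (VFun HD HE HG).

(* Main.v *)
Require Import Defs.
From Stdlib Require Import ProofIrrelevance ClassicalEpsilon.

Section Tot.
Context {C : TwoCatData} (HC : is_2cat C).

Definition vv (a b : cell C) : cell C :=
  match excluded_middle_informative (t2 a = s2 b) with
  | left p => v2 a b p | right _ => a end.
Definition hh (a b : cell C) : cell C :=
  match excluded_middle_informative (t1 (s2 a) = s1 (s2 b)) with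
  | left p => h2 a b p | right _ => a end.
Definition cc (f g : mor C) : mor C :=
  match excluded_middle_informative (t1 f = s1 g) with
  | left p => c1 f g p | right _ => f end.

Lemma vv_eq a b p : v2 a b p = vv a b.
Proof. unfold vv. destruct (excluded_middle_informative _) as [p'|n];
  [f_equal; apply proof_irrelevance | contradiction]. Qed.
Lemma hh_eq a b p : h2 a b p = hh a b.
Proof. unfold hh. destruct (excluded_middle_informative _) as [p'|n];
  [f_equal; apply proof_irrelevance | contradiction]. Qed.
Lemma cc_eq a b p : c1 a b p = cc a b.
Proof. unfold cc. destruct (excluded_middle_informative _) as [p'|n];
  [f_equal; apply proof_irrelevance | contradiction]. Qed.

Definition T1 (f : mor C) x y := s1 f = x /\ t1 f = y.
Definition T2 (a : cell C) f g := s2 a = f /\ t2 a = g.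

Lemma T1_id x : T1 (id1 x) x x.
Proof. split; [apply (ax_id1_s _ HC) | apply (ax_id1_t _ HC)]. Qed.
Lemma T1_cc f g x y z : T1 f x y -> T1 g y z -> T1 (cc f g) x z.
Proof. intros [a b] [c d]. assert (p : t1 f = s1 g) by congruence.
  rewrite <- (cc_eq _ _ p). split; [rewrite (ax_c1_s _ HC); auto | rewrite (ax_c1_t _ HC); auto]. Qed.
Lemma T2_id f : T2 (id2 f) f f.
Proof. split; [apply (ax_id2_s _ HC) | apply (ax_id2_t _ HC)]. Qed.
Lemma T2_vv a b f g h : T2 a f g -> T2 b g h -> T2 (vv a b) f h.
Proof. intros [e1 e2] [e3 e4]. assert (p : t2 a = s2 b) by congruence.
  rewrite <- (vv_eq _ _ p). split; [rewrite (ax_v2_s _ HC); auto | rewrite (ax_v2_t _ HC); auto]. Qed.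
Lemma T1_par a f g x y : T2 a f g -> T1 f x y -> T1 g x y.
Proof. intros [e1 e2] [e3 e4]; subst. split.
  - rewrite <- (ax_par_s _ HC); auto. - rewrite <- (ax_par_t _ HC); auto. Qed.
Lemma T2_hh a b f g f' g' x y z : T2 a f g -> T2 b f' g' -> T1 f x y -> T1 f' y z ->
  T2 (hh a b) (cc f f') (cc g g').
Proof. intros Ha Hb H1 H2. pose proof (T1_par _ _ _ _ _ Ha H1) as H3.
  pose proof (T1_par _ _ _ _ _ Hb H2) as H4.
  destruct Ha as [e1 e2], Hb as [e3 e4], H1, H2, H3, H4.
  assert (p : t1 (s2 a) = s1 (s2 b)) by congruence.
  assert (q : t1 (t2 a) = s1 (t2 b)) by congruence.
  rewrite <- (hh_eq _ _ p). split.
  - rewrite (ax_h2_s _ HC _ _ p p), cc_eq. congruence.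
  - rewrite (ax_h2_t _ HC _ _ p q), cc_eq. congruence. Qed.

Lemma bd_v a b f g h : T2 a f g -> T2 b g h -> t2 a = s2 b.
Proof. intros [] []; congruence. Qed.
Lemma bd_h a b f g f' g' x y z : T2 a f g -> T2 b f' g' -> T1 f x y -> T1 f' y z ->
  t1 (s2 a) = s1 (s2 b).
Proof. intros [] [] [] []; congruence. Qed.
Lemma bd_c f g x y z : T1 f x y -> T1 g y z -> t1 f = s1 g.
Proof. intros [] []; congruence. Qed.
Lemma bd_s2 a f g : T2 a f g -> s2 a = f. Proof. intros []; auto. Qed.
Lemma bd_t2 a f g : T2 a f g -> t2 a = g. Proof. intros []; auto. Qed.
Lemma bd_s1 a f g x y : T2 a f g -> T1 f x y -> s1 (s2 a) = x. Proof. intros [] []; congruence. Qed.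
Lemma bd_t1 a f g x y : T2 a f g -> T1 f x y -> t1 (s2 a) = y. Proof. intros [] []; congruence. Qed.

Lemma vv_idl a f : f = s2 a -> vv (id2 f) a = a.
Proof. intros ->. assert (p : t2 (id2 (s2 a)) = s2 a) by apply (ax_id2_t _ HC).
  rewrite <- (vv_eq _ _ p). apply (ax_v2_idl _ HC). Qed.
Lemma vv_idr a f : f = t2 a -> vv a (id2 f) = a.
Proof. intros ->. assert (p : t2 a = s2 (id2 (t2 a))) by (symmetry; apply (ax_id2_s _ HC)).
  rewrite <- (vv_eq _ _ p). apply (ax_v2_idr _ HC). Qed.
Lemma vv_assoc a b c : t2 a = s2 b -> t2 b = s2 c -> vv (vv a b) c = vv a (vv b c).
Proof. intros p q. rewrite <- (vv_eq _ _ p), <- (vv_eq _ _ q).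
  assert (r : t2 (v2 a b p) = s2 c) by (rewrite (ax_v2_t _ HC); auto).
  assert (r' : t2 a = s2 (v2 b c q)) by (rewrite (ax_v2_s _ HC); auto).
  rewrite <- (vv_eq _ _ r), <- (vv_eq _ _ r'). apply (ax_v2_assoc _ HC). Qed.
Lemma hh_assoc a b c : t1 (s2 a) = s1 (s2 b) -> t1 (s2 b) = s1 (s2 c) ->
  hh (hh a b) c = hh a (hh b c).
Proof. intros p q. rewrite <- (hh_eq _ _ p), <- (hh_eq _ _ q).
  assert (r : t1 (s2 (h2 a b p)) = s1 (s2 c))
    by (rewrite (ax_h2_s _ HC _ _ p p), (ax_c1_t _ HC); auto).
  assert (r' : t1 (s2 a) = s1 (s2 (h2 b c q)))
    by (rewrite (ax_h2_s _ HC _ _ q q), (ax_c1_s _ HC); auto).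
  rewrite <- (hh_eq _ _ r), <- (hh_eq _ _ r'). apply (ax_h2_assoc _ HC). Qed.
Lemma hh_id2 f g : t1 f = s1 g -> hh (id2 f) (id2 g) = id2 (cc f g).
Proof. intros p. assert (p' : t1 (s2 (id2 f)) = s1 (s2 (id2 g)))
    by (rewrite !(ax_id2_s _ HC); auto).
  rewrite <- (hh_eq _ _ p'), <- (cc_eq _ _ p). apply (ax_h2_id2 _ HC). Qed.
Lemma hh_idl a x : x = s1 (s2 a) -> hh (id2 (id1 x)) a = a.
Proof. intros ->.
  assert (p : t1 (s2 (id2 (id1 (s1 (s2 a))))) = s1 (s2 a))
    by (rewrite (ax_id2_s _ HC), (ax_id1_t _ HC); auto).
  rewrite <- (hh_eq _ _ p). apply (ax_h2_idl _ HC). Qed.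
Lemma hh_idr a x : x = t1 (s2 a) -> hh a (id2 (id1 x)) = a.
Proof. intros ->.
  assert (p : t1 (s2 a) = s1 (s2 (id2 (id1 (t1 (s2 a))))))
    by (rewrite (ax_id2_s _ HC), (ax_id1_s _ HC); auto).
  rewrite <- (hh_eq _ _ p). apply (ax_h2_idr _ HC). Qed.
Lemma interchange a b c d : t2 a = s2 b -> t2 c = s2 d -> t1 (s2 a) = s1 (s2 c) ->
  hh (vv a b) (vv c d) = vv (hh a c) (hh b d).
Proof. intros p q r.
  rewrite <- (vv_eq _ _ p), <- (vv_eq _ _ q).
  assert (r0 : t1 (s2 (v2 a b p)) = s1 (s2 (v2 c d q)))
    by (rewrite !(ax_v2_s _ HC); auto).
  assert (r2 : t1 (s2 b) = s1 (s2 d)).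
  { rewrite <- p, <- q, <- (ax_par_t _ HC), <- (ax_par_s _ HC). auto. }
  assert (r3 : t2 (h2 a c r) = s2 (h2 b d r2)).
  { assert (q1 : t1 (t2 a) = s1 (t2 c)) by
      (rewrite <- (ax_par_t _ HC), <- (ax_par_s _ HC); auto).
    rewrite (ax_h2_t _ HC _ _ r q1), (ax_h2_s _ HC _ _ r2 r2).
    revert q1 r2. rewrite p, q. intros. f_equal. apply proof_irrelevance. }
  rewrite <- (hh_eq _ _ r0), <- (hh_eq _ _ r), <- (hh_eq _ _ r2), <- (vv_eq _ _ r3).
  apply (ax_interchange _ HC). Qed.

Lemma cc_assoc f g h : t1 f = s1 g -> t1 g = s1 h -> cc (cc f g) h = cc f (cc g h).
Proof. intros p q. rewrite <- (cc_eq _ _ p), <- (cc_eq _ _ q).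
  assert (r : t1 (c1 f g p) = s1 h) by (rewrite (ax_c1_t _ HC); auto).
  assert (r' : t1 f = s1 (c1 g h q)) by (rewrite (ax_c1_s _ HC); auto).
  rewrite <- (cc_eq _ _ r), <- (cc_eq _ _ r'). apply (ax_c1_assoc _ HC). Qed.
Lemma cc_idl f x : x = s1 f -> cc (id1 x) f = f.
Proof. intros ->. assert (p : t1 (id1 (s1 f)) = s1 f) by apply (ax_id1_t _ HC).
  rewrite <- (cc_eq _ _ p). apply (ax_c1_idl _ HC). Qed.
Lemma cc_idr f x : x = t1 f -> cc f (id1 x) = f.
Proof. intros ->. assert (p : t1 f = s1 (id1 (t1 f))) by (symmetry; apply (ax_id1_s _ HC)).
  rewrite <- (cc_eq _ _ p). apply (ax_c1_idr _ HC). Qed.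

Definition isinv (a b : cell C) f g := T2 a f g /\ T2 b g f /\ vv a b = id2 f /\ vv b a = id2 g.

Lemma inv2_isinv a : inv2 a <-> exists b, isinv a b (s2 a) (t2 a).
Proof. split.
  - intros [b [p [q [E1 E2]]]]. exists b. rewrite vv_eq in E1, E2.
    split; [split; auto|]. split; [split; auto|]. auto.
  - intros [b [[_ _] [[e1 e2] [E1 E2]]]].
    assert (p : t2 a = s2 b) by auto. assert (q : t2 b = s2 a) by auto.
    exists b, p, q. rewrite !vv_eq. auto. Qed.
End Tot.

Lemma bd_s2' {C : TwoCatData} (a : cell C) f g : T2 a f g -> f = s2 a. Proof. intros []; auto. Qed.
Lemma bd_t2' {C : TwoCatData} (a : cell C) f g : T2 a f g -> g = t2 a. Proof. intros []; auto. Qed.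
Lemma bd_s1' {C : TwoCatData} (a : cell C) f g x y : T2 a f g -> T1 f x y -> x = s1 (s2 a).
Proof. intros [] []; congruence. Qed.
Lemma bd_t1' {C : TwoCatData} (a : cell C) f g x y : T2 a f g -> T1 f x y -> y = t1 (s2 a).
Proof. intros [] []; congruence. Qed.
Create HintDb cat.
#[export] Hint Resolve bd_s2' bd_t2' bd_s1' bd_t1' : cat.
#[export] Hint Resolve T1_id T1_cc T2_id T2_vv T2_hh bd_v bd_h bd_c : cat.
Ltac bd := solve [eauto 6 with cat].

Section Inv.
Context {C : TwoCatData} (HC : is_2cat C).

Lemma isinv_T2 (a b : cell C) f g : isinv a b f g -> T2 a f g. Proof. intros [H _]; exact H. Qed.
Lemma isinv_T2' (a b : cell C) f g : isinv a b f g -> T2 b g f. Proof. intros [_ [H _]]; exact H. Qed.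
Lemma isinv_sym (a b : cell C) f g : isinv a b f g -> isinv b a g f.
Proof. intros [h1 [h2 [h3 h4]]]; repeat split; auto; apply h1 || apply h2. Qed.
Lemma isinv_id (f : mor C) : isinv (id2 f) (id2 f) f f.
Proof. assert (T2 (id2 f) f f) by (apply T2_id; auto).
  repeat split; try apply H; apply vv_idl; auto; symmetry; apply (ax_id2_s _ HC). Qed.
Lemma isinv_vv (a a' b b' : cell C) f g h : isinv a a' f g -> isinv b b' g h ->
  isinv (vv a b) (vv b' a') f h.
Proof. intros [A1 [A2 [A3 A4]]] [B1 [B2 [B3 B4]]].
  split; [bd|]. split; [bd|]. split.
  - rewrite (vv_assoc HC) by bd. rewrite <- (vv_assoc HC b) by bd. rewrite B3.
    rewrite (vv_idl HC) by (destruct A2; auto). auto.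
  - rewrite (vv_assoc HC) by bd. rewrite <- (vv_assoc HC a') by bd. rewrite A4.
    rewrite (vv_idl HC) by (destruct B1; auto). auto. Qed.
Lemma isinv_hh (a a' b b' : cell C) f g f' g' x y z : isinv a a' f g -> isinv b b' f' g' ->
  T1 f x y -> T1 f' y z ->
  isinv (hh a b) (hh a' b') (cc f f') (cc g g').
Proof. intros [A1 [A2 [A3 A4]]] [B1 [B2 [B3 B4]]] X Y.
  assert (T1 g x y) by (eapply T1_par; eauto). assert (T1 g' y z) by (eapply T1_par; eauto).
  split; [bd|]. split; [bd|]. split.
  - rewrite <- (interchange HC) by bd. rewrite A3, B3. apply (hh_id2 HC). bd.
  - rewrite <- (interchange HC) by bd. rewrite A4, B4. apply (hh_id2 HC). bd. Qed.
Lemma isinv_uniq (a b b' : cell C) f g : isinv a b f g -> isinv a b' f g -> b = b'.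
Proof. intros [A1 [A2 [A3 A4]]] [B1 [B2 [B3 B4]]].
  transitivity (vv b (vv a b')).
  - rewrite B3. symmetry. apply (vv_idr HC). destruct A2; auto.
  - rewrite <- (vv_assoc HC) by bd. rewrite A4. apply (vv_idl HC). destruct B2; auto. Qed.
Lemma isinv_ex (a : cell C) f g : T2 a f g -> inv2 a -> exists b, isinv a b f g.
Proof. intros [<- <-] H. apply inv2_isinv in H. exact H. Qed.
Lemma isinv_inv2 (a b : cell C) f g : isinv a b f g -> inv2 a.
Proof. intros H. apply inv2_isinv. exists b. destruct H as [[<- <-] ?]. split; auto. split; auto. Qed.
End Inv.

Section Fun.
Context {A B : TwoCatData} (HA : is_2cat A) (HB : is_2cat B)
  {F : TwoFunctorData A B} (HF : is_2functor F).

Lemma F_T1 f x y : T1 f x y -> T1 (F1 F f) (F0 F x) (F0 F y).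
Proof. intros [<- <-]. split; [apply (fax_s1 _ HF) | apply (fax_t1 _ HF)]. Qed.
Lemma F_T2 a f g : T2 a f g -> T2 (F2 F a) (F1 F f) (F1 F g).
Proof. intros [<- <-]. split; [apply (fax_s2 _ HF) | apply (fax_t2 _ HF)]. Qed.
Lemma F_vv a b : t2 a = s2 b -> F2 F (vv a b) = vv (F2 F a) (F2 F b).
Proof. intros p. assert (q : t2 (F2 F a) = s2 (F2 F b))
    by (rewrite (fax_t2 _ HF), (fax_s2 _ HF); f_equal; auto).
  rewrite <- (vv_eq _ _ p), <- (vv_eq _ _ q). apply (fax_v2 _ HF). Qed.
Lemma F_hh a b : t1 (s2 a) = s1 (s2 b) -> F2 F (hh a b) = hh (F2 F a) (F2 F b).
Proof. intros p. assert (q : t1 (s2 (F2 F a)) = s1 (s2 (F2 F b)))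
    by (rewrite (fax_s2 _ HF), (fax_s2 _ HF), (fax_t1 _ HF), (fax_s1 _ HF); f_equal; auto).
  rewrite <- (hh_eq _ _ p), <- (hh_eq _ _ q). apply (fax_h2 _ HF). Qed.
Lemma F_cc f g : t1 f = s1 g -> F1 F (cc f g) = cc (F1 F f) (F1 F g).
Proof. intros p. assert (q : t1 (F1 F f) = s1 (F1 F g))
    by (rewrite (fax_t1 _ HF), (fax_s1 _ HF); f_equal; auto).
  rewrite <- (cc_eq _ _ p), <- (cc_eq _ _ q). apply (fax_c1 _ HF). Qed.
Lemma F_isinv a b f g : isinv a b f g -> isinv (F2 F a) (F2 F b) (F1 F f) (F1 F g).
Proof. intros [A1 [A2 [A3 A4]]].
  split; [apply F_T2; auto|]. split; [apply F_T2; auto|]. split.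
  - rewrite <- F_vv by bd. rewrite A3. apply (fax_id2 _ HF).
  - rewrite <- F_vv by bd. rewrite A4. apply (fax_id2 _ HF). Qed.
End Fun.

Section HT.
Context {A : TwoCatData} (HA : is_2cat A).

Definition emb (a : cell A) : gsq (HH A) :=
  exist (fun a : sq (HH A) => is_glob a) a (conj eq_refl eq_refl).
Lemma gsq_ext (a b : gsq (HH A)) : proj1_sig a = proj1_sig b -> a = b.
Proof. destruct a as [a pa], b as [b pb]; simpl; intros ->.
  f_equal; apply proof_irrelevance. Qed.

Lemma inv2_H (a : cell (Hc (HH_is_dblcat HA))) : inv2 a <-> inv2 (proj1_sig a).
Proof. split.
  - intros [b [p [q [E1 E2]]]]. exists (proj1_sig b), p, q.
    apply (f_equal (@proj1_sig _ _)) in E1, E2. simpl in E1, E2. auto.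
  - intros [b [p [q [E1 E2]]]]. exists (emb b), p, q. split; apply gsq_ext; simpl; auto.
Qed.
Lemma iso2_H (f g : mor A) : @iso2 (Hc (HH_is_dblcat HA)) f g <-> iso2 f g.
Proof. split.
  - intros [a [E1 [E2 I]]]. exists (proj1_sig a). apply inv2_H in I. auto.
  - intros [a [E1 [E2 I]]]. exists (emb a). split; auto. split; auto.
    apply inv2_H. auto. Qed.
Lemma equiv_H (f : mor A) : @is_equiv (Hc (HH_is_dblcat HA)) f <-> is_equiv f.
Proof. split.
  - intros [g [p [q [I1 I2]]]]. exists g, p, q. split; apply iso2_H; auto.
  - intros [g [p [q [I1 I2]]]]. exists g, p, q. split; apply iso2_H; auto. Qed.
End HT.

Section HFunT.
Context {A B : TwoCatData} (HA : is_2cat A) (HB : is_2cat B)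
  {F : TwoFunctorData A B} (HF : is_2functor F).

Lemma biequiv_H : biequivalence F <->
  biequivalence (HFun (HH_is_dblcat HA) (HH_is_dblcat HB) (HHF_is_dblfunctor HF)).
Proof. unfold biequivalence; simpl. split.
  - intros [E1 [E2 E3]]. split; [|split].
    + intros y. destruct (E1 y) as [x [f [? [? ?]]]]. exists x, f.
      split; auto. split; auto. apply equiv_H; auto.
    + intros x x' g h1 h2. destruct (E2 x x' g h1 h2) as [f [? [? ?]]].
      exists f. split; auto. split; auto. apply iso2_H; auto.
    + intros f f' e1 e2 b b1 b2. destruct (E3 f f' e1 e2 (proj1_sig b) b1 b2)
        as [a [[a1 [a2 a3]] U]].
      exists (emb a). split.
      * split; auto. split; auto. apply gsq_ext. simpl. auto.
      * intros a' [c1 [c2 c3]]. apply gsq_ext. simpl. apply U.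
        split; auto. split; auto. rewrite <- c3. reflexivity.
  - intros [E1 [E2 E3]]. split; [|split].
    + intros y. destruct (E1 y) as [x [f [? [? ?]]]]. exists x, f.
      split; auto. split; auto. apply (equiv_H HB); auto.
    + intros x x' g h1 h2. destruct (E2 x x' g h1 h2) as [f [? [? ?]]].
      exists f. split; auto. split; auto. apply (iso2_H HB); auto.
    + intros f f' e1 e2 b b1 b2. destruct (E3 f f' e1 e2 (emb b) b1 b2)
        as [a [[a1 [a2 a3]] U]].
      exists (proj1_sig a). split.
      * split; auto. split; auto. apply (f_equal (@proj1_sig _ _)) in a3. exact a3.
      * intros a' [c1 [c2 c3]]. assert (a = emb a') as ->.
        { apply U. split; auto. split; auto. apply gsq_ext. simpl. auto. }
        reflexivity.
Qed.

Lemma fib_H : lack_fibration F <->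
  lack_fibration (HFun (HH_is_dblcat HA) (HH_is_dblcat HB) (HHF_is_dblfunctor HF)).
Proof. unfold lack_fibration; simpl. split.
  - intros [E1 E2]. split.
    + intros c b h e. apply (equiv_H HB) in e. destruct (E1 c b h e) as [a [? [? ?]]].
      exists a. split; auto. split; auto. apply equiv_H; auto.
    + intros c be h i. apply (inv2_H HB) in i. destruct (E2 c (proj1_sig be) h i) as [al [? [? ?]]].
      exists (emb al). split; auto. split; [apply inv2_H; auto|]. apply gsq_ext. simpl. auto.
  - intros [E1 E2]. split.
    + intros c b h e. apply (equiv_H HB) in e. destruct (E1 c b h e) as [a [? [? ?]]].
      exists a. split; auto. split; auto. apply (equiv_H HA); auto.
    + intros c be h i. apply (inv2_H HB (emb be)) in i. destruct (E2 c (emb be) h i) as [al [? [? ?]]].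
      exists (proj1_sig al). split; auto. split; [apply (inv2_H HA); auto|].
      apply (f_equal (@proj1_sig _ _)) in H1. exact H1.
Qed.
End HFunT.

Lemma vcell_ext {D : DblCatData} (c d : vcell D) : vsrc c = vsrc d -> vtgt c = vtgt d ->
  proj1_sig (sg0 c) = proj1_sig (sg0 d) -> proj1_sig (sg1 c) = proj1_sig (sg1 d) -> c = d.
Proof.
  destruct c as [a b [s0 g0] [s1 g1] ? ? ? ? ? ? ?], d as [a' b' [t0 h0] [t1 h1] ? ? ? ? ? ? ?];
  simpl; intros -> -> -> ->.
  assert (g0 = h0) as -> by apply proof_irrelevance.
  assert (g1 = h1) as -> by apply proof_irrelevance.
  f_equal; apply proof_irrelevance.
Qed.

Section VA.
Context {A : TwoCatData} (HA : is_2cat A).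
Notation HD := (HH_is_dblcat HA).
Notation V := (Vc HD).

Lemma Vv_src c d p : vsrc (vcell_v HD c d p) = vsrc c.
Proof. destruct c as [? ? [? ?] [? ?] ? ? ? ? ? ? ?], d as [? ? [? ?] [? ?] ? ? ? ? ? ? ?];
  simpl in *; subst; reflexivity. Qed.
Lemma Vv_tgt c d p : vtgt (vcell_v HD c d p) = vtgt d.
Proof. destruct c as [? ? [? ?] [? ?] ? ? ? ? ? ? ?], d as [? ? [? ?] [? ?] ? ? ? ? ? ? ?];
  simpl in *; subst; reflexivity. Qed.
Lemma Vv_sg0 c d p : proj1_sig (sg0 (vcell_v HD c d p)) =
  vv (proj1_sig (sg0 c)) (proj1_sig (sg0 d)).
Proof. destruct c as [? ? [? ?] [? ?] ? ? ? ? ? ? ?], d as [? ? [? ?] [? ?] ? ? ? ? ? ? ?];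
  simpl in *; subst; simpl. apply vv_eq. Qed.
Lemma Vv_sg1 c d p : proj1_sig (sg1 (vcell_v HD c d p)) =
  vv (proj1_sig (sg1 c)) (proj1_sig (sg1 d)).
Proof. destruct c as [? ? [? ?] [? ?] ? ? ? ? ? ? ?], d as [? ? [? ?] [? ?] ? ? ? ? ? ? ?];
  simpl in *; subst; simpl. apply vv_eq. Qed.
Lemma Vh_src c d p : vsrc (vcell_h HD c d p) = hh (vsrc c) (vsrc d).
Proof. destruct c as [? ? [? ?] [? ?] ? ? ? ? ? ? ?], d as [? ? [? ?] [? ?] ? ? ? ? ? ? ?];
  simpl in *. apply hh_eq. Qed.
Lemma Vh_tgt c d p : vtgt (vcell_h HD c d p) = hh (vtgt c) (vtgt d).
Proof. destruct c as [? ? [? ?] [? ?] ? ? ? ? ? ? ?], d as [? ? [? ?] [? ?] ? ? ? ? ? ? ?];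
  simpl in *. apply hh_eq. Qed.
Lemma Vh_sg0 c d p : proj1_sig (sg0 (vcell_h HD c d p)) =
  hh (proj1_sig (sg0 c)) (proj1_sig (sg0 d)).
Proof. destruct c as [? ? [? ?] [? ?] ? ? ? ? ? ? ?], d as [? ? [? ?] [? ?] ? ? ? ? ? ? ?];
  simpl in *. apply hh_eq. Qed.
Lemma Vh_sg1 c d p : proj1_sig (sg1 (vcell_h HD c d p)) =
  hh (proj1_sig (sg1 c)) (proj1_sig (sg1 d)).
Proof. destruct c as [? ? [? ?] [? ?] ? ? ? ? ? ? ?], d as [? ? [? ?] [? ?] ? ? ? ? ? ? ?];
  simpl in *. apply hh_eq. Qed.

Lemma vc_T0 (c : vcell (HH A)) : T2 (proj1_sig (sg0 c)) (s2 (vsrc c)) (s2 (vtgt c)).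
Proof. split; [apply (vc0T c) | apply (vc0B c)]. Qed.
Lemma vc_T1 (c : vcell (HH A)) : T2 (proj1_sig (sg1 c)) (t2 (vsrc c)) (t2 (vtgt c)).
Proof. split; [apply (vc1T c) | apply (vc1B c)]. Qed.
Lemma vc_eq (c : vcell (HH A)) : vv (proj1_sig (sg0 c)) (vtgt c) = vv (vsrc c) (proj1_sig (sg1 c)).
Proof. assert (p : t2 (proj1_sig (sg0 c)) = s2 (vtgt c)) by apply (vc0B c).
  assert (q : t2 (vsrc c) = s2 (proj1_sig (sg1 c))) by (symmetry; apply (vc1T c)).
  rewrite <- (vv_eq _ _ p), <- (vv_eq _ _ q). apply (vceq c). Qed.

Definition mkV (al be s0 s1 : cell A) (H1 : s2 s0 = s2 al) (H2 : t2 s0 = s2 be)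
  (H3 : s2 s1 = t2 al) (H4 : t2 s1 = t2 be) (E : vv s0 be = vv al s1) : vcell (HH A).
Proof.
  refine (Build_vcell (HH A) al be (emb s0) (emb s1) _ _ H1 H2 H3 H4 _); simpl.
  - rewrite <- H1, <- H2. apply (ax_par_s _ HA).
  - rewrite <- H1, <- H2. apply (ax_par_t _ HA).
  - intros p q. rewrite !vv_eq. exact E.
Defined.
End VA.

Section VB.
Context {A : TwoCatData} (HA : is_2cat A).
Notation HD := (HH_is_dblcat HA).
Notation V := (Vc HD).

Lemma invV_comp (c : vcell (HH A)) : @inv2 V c ->
  exists s0' s1', isinv (proj1_sig (sg0 c)) s0' (s2 (vsrc c)) (s2 (vtgt c)) /\
                  isinv (proj1_sig (sg1 c)) s1' (t2 (vsrc c)) (t2 (vtgt c)).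
Proof.
  intros [d [p [q [E1 E2]]]]. simpl in p, q.
  change (vcell_v HD c d p = vcell_id HD (vsrc c)) in E1.
  change (vcell_v HD d c q = vcell_id HD (vtgt c)) in E2.
  assert (Et : vtgt d = vsrc c) by (rewrite <- (Vv_tgt HA c d p), E1; reflexivity).
  pose proof (f_equal (fun e => proj1_sig (sg0 e)) E1) as F1.
  pose proof (f_equal (fun e => proj1_sig (sg1 e)) E1) as F2.
  pose proof (f_equal (fun e => proj1_sig (sg0 e)) E2) as F3.
  pose proof (f_equal (fun e => proj1_sig (sg1 e)) E2) as F4.
  cbv beta in F1, F2, F3, F4. rewrite (Vv_sg0 HA c d p) in F1. rewrite (Vv_sg0 HA d c q) in F3. rewrite (Vv_sg1 HA c d p) in F2. rewrite (Vv_sg1 HA d c q) in F4. simpl in F1, F2, F3, F4.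
  pose proof (vc_T0 c). pose proof (vc_T1 c). pose proof (vc_T0 d). pose proof (vc_T1 d).
  rewrite Et, <- p in H1, H2.
  exists (proj1_sig (sg0 d)), (proj1_sig (sg1 d)).
  split; (split; [auto|split; [auto|split; auto]]); rewrite ?q; auto.
Qed.

Lemma invV_of (c : vcell (HH A)) s0' s1' :
  isinv (proj1_sig (sg0 c)) s0' (s2 (vsrc c)) (s2 (vtgt c)) ->
  isinv (proj1_sig (sg1 c)) s1' (t2 (vsrc c)) (t2 (vtgt c)) -> @inv2 V c.
Proof.
  intros I0 I1. pose proof (vc_eq c) as Ec.
  set (al := vsrc c) in *. set (be := vtgt c) in *.
  set (x0 := proj1_sig (sg0 c)) in *. set (x1 := proj1_sig (sg1 c)) in *.
  destruct I0 as [A1 [A2 [A3 A4]]], I1 as [B1 [B2 [B3 B4]]].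
  assert (Tal : T2 al (s2 al) (t2 al)) by (split; reflexivity).
  assert (Tbe : T2 be (s2 be) (t2 be)) by (split; reflexivity).
  assert (E : vv s0' al = vv be s1').
  { transitivity (vv (vv s0' (vv al x1)) s1').
    - rewrite (vv_assoc HA s0') by bd. rewrite (vv_assoc HA al) by bd. rewrite B3.
      rewrite (vv_idr HA) by (destruct Tal; auto). reflexivity.
    - rewrite <- Ec. rewrite <- (vv_assoc HA s0') by bd. rewrite A4.
      rewrite (vv_idl HA) by (destruct Tbe; auto). reflexivity. }
  destruct A2 as [a1 a2], B2 as [b1 b2].
  exists (mkV HA be al s0' s1' a1 a2 b1 b2 E), eq_refl, eq_refl.
  set (d := mkV HA be al s0' s1' a1 a2 b1 b2 E).
  split.
  - change (vcell_v HD c d eq_refl = vcell_id HD al).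
    apply vcell_ext; rewrite ?Vv_src, ?Vv_tgt, ?Vv_sg0, ?Vv_sg1; simpl; auto.
  - change (vcell_v HD d c eq_refl = vcell_id HD be).
    apply vcell_ext; rewrite ?Vv_src, ?Vv_tgt, ?Vv_sg0, ?Vv_sg1; simpl; auto.
Qed.
End VB.

Section V1.
Context {A : TwoCatData} (HA : is_2cat A).
Notation HD := (HH_is_dblcat HA).
Notation V := (Vc HD).

Definition mkV2 (al be s0 s1 : cell A) f g f' g' (Ta : T2 al f g) (Tb : T2 be f' g')
  (T0 : T2 s0 f f') (T1' : T2 s1 g g') (E : vv s0 be = vv al s1) : vcell (HH A) :=
  mkV HA al be s0 s1 (eq_trans (proj1 T0) (eq_sym (proj1 Ta)))
    (eq_trans (proj2 T0) (eq_sym (proj1 Tb)))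
    (eq_trans (proj1 T1') (eq_sym (proj2 Ta)))
    (eq_trans (proj2 T1') (eq_sym (proj2 Tb))) E.

Lemma T2_self (a : cell A) : T2 a (s2 a) (t2 a). Proof. split; reflexivity. Qed.

Lemma iso2_T (f g : mor A) : iso2 f g -> exists a a', isinv a a' f g.
Proof. intros [a [<- [<- I]]]. apply (inv2_isinv) in I. destruct I as [b Ib]. eauto. Qed.

Lemma equivV_of (al al' : cell A) f f' x y : isinv al al' f f' -> T1 f x y -> is_equiv f ->
  @is_equiv V al.
Proof.
  intros Ia Tf [h [pf [qf [I1 I2]]]].
  pose proof Tf as [ex ey].
  apply iso2_T in I1. destruct I1 as [et [et' It]].
  apply iso2_T in I2. destruct I2 as [ep [ep' Ip]].
  rewrite (cc_eq _ _ pf) in It. rewrite (cc_eq _ _ qf) in Ip.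
  rewrite ex in It. rewrite ey in Ip.
  assert (Th : T1 h y x) by (split; congruence).
  pose proof (isinv_T2 _ _ _ _ Ia) as Ta. pose proof (isinv_T2' _ _ _ _ Ia) as Ta'.
  assert (Tf' : T1 f' x y) by (eapply T1_par; eauto).
  pose proof (isinv_T2 _ _ _ _ It) as Tt. pose proof (isinv_T2' _ _ _ _ It) as Tt'.
  pose proof (isinv_T2 _ _ _ _ Ip) as Tp. pose proof (isinv_T2' _ _ _ _ Ip) as Tp'.
  assert (p : t1 (s2 al) = s1 (s2 (id2 h))).
  { rewrite (ax_id2_s _ HA). destruct Ta as [-> _]. congruence. }
  assert (q : t1 (s2 (id2 h)) = s1 (s2 al)).
  { rewrite (ax_id2_s _ HA). destruct Ta as [-> _]. congruence. }
  assert (Ex : s1 (s2 al) = x) by (destruct Ta as [-> _]; auto).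
  assert (Ey : t1 (s2 al) = y) by (destruct Ta as [-> _]; auto).
  exists (id2 h), p, q. split.
  -
    assert (T3 : T2 (hh al (id2 h)) (cc f h) (cc f' h)) by bd.
    assert (Ti : T2 (id2 (id1 x)) (id1 x) (id1 x)) by bd.
    assert (E : vv et (hh al (id2 h)) = vv (id2 (id1 x)) (vv et (hh al (id2 h)))).
    { rewrite (vv_idl HA); auto. symmetry. eapply bd_s2. bd. }
    exists (mkV2 _ _ et (vv et (hh al (id2 h))) _ _ _ _ Ti T3 Tt (T2_vv HA _ _ _ _ _ Tt T3) E).
    split; [|split].
    + simpl. rewrite Ex. reflexivity.
    + simpl. symmetry. apply hh_eq.
    + eapply (invV_of HA); simpl.
      * rewrite (ax_id2_s _ HA). rewrite (bd_s2 _ _ _ T3). exact It.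
      * rewrite (ax_id2_t _ HA). rewrite (bd_t2 _ _ _ T3).
        eapply (isinv_vv HA); [exact It|]. eapply (isinv_hh HA); eauto. apply (isinv_id HA).
  -
    assert (T3 : T2 (hh (id2 h) al) (cc h f) (cc h f')) by bd.
    assert (T3' : T2 (hh (id2 h) al') (cc h f') (cc h f)) by bd.
    assert (Ti : T2 (id2 (id1 y)) (id1 y) (id1 y)) by bd.
    assert (E : vv ep (id2 (id1 y)) = vv (hh (id2 h) al) (vv (hh (id2 h) al') ep)).
    { rewrite (vv_idr HA) by (destruct Tp as [_ ->]; auto).
      rewrite <- (vv_assoc HA) by bd. rewrite <- (interchange HA) by bd.
      destruct Ia as [_ [_ [-> _]]]. rewrite (vv_idl HA) by (rewrite (ax_id2_s _ HA); auto).
      rewrite (hh_id2 HA) by bd. rewrite (vv_idl HA); auto. destruct Tp as [-> _]; auto. }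
    exists (mkV2 _ _ ep (vv (hh (id2 h) al') ep) _ _ _ _ T3 Ti Tp (T2_vv HA _ _ _ _ _ T3' Tp) E).
    split; [|split].
    + simpl. symmetry. apply hh_eq.
    + simpl. rewrite Ey. reflexivity.
    + eapply (invV_of HA); simpl.
      * rewrite (ax_id2_s _ HA). rewrite (bd_s2 _ _ _ T3). exact Ip.
      * rewrite (ax_id2_t _ HA). rewrite (bd_t2 _ _ _ T3).
        eapply (isinv_vv HA); [|exact Ip]. eapply (isinv_hh HA); eauto.
        apply (isinv_id HA). apply isinv_sym; exact Ia.
Qed.
End V1.

Section Whisk.
Context {C : TwoCatData} (HC : is_2cat C).

Lemma whisk_inv (g g' h h' : mor C) (y z w : ob C) (al ta ta' P : cell C) :
  T1 g y z -> T2 al g g' -> T1 h z w -> T1 h' w z -> isinv ta ta' (cc h h') (id1 z) ->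
  T2 P (cc g' h) (cc g h) ->
  let K := vv (hh (id2 g') ta') (vv (hh P (id2 h')) (hh (id2 g) ta)) in
  T2 K g' g /\
  (vv (hh al (id2 h)) P = id2 (cc g h) -> vv al K = id2 g) /\
  (vv P (hh al (id2 h)) = id2 (cc g' h) -> vv K al = id2 g').
Proof.
  intros Tg Ta Th Th' It TP K.
  assert (Tg' : T1 g' y z) by (eapply T1_par; eauto).
  destruct It as [Tt [Tt' [It1 It2]]].
  assert (Ac : forall k, T1 k y z -> cc k (cc h h') = cc (cc k h) h')
    by (intros; symmetry; apply (cc_assoc HC); bd).
  assert (Ir : forall k, T1 k y z -> cc k (id1 z) = k)
    by (intros k [_ e]; apply (cc_idr HC); auto).
  assert (K1 : T2 (hh (id2 g') ta') g' (cc (cc g' h) h')).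
  { assert (H : T2 (hh (id2 g') ta') (cc g' (id1 z)) (cc g' (cc h h'))) by bd.
    rewrite Ir, Ac in H by auto. exact H. }
  assert (K1' : T2 (hh (id2 g') ta) (cc (cc g' h) h') g').
  { assert (H : T2 (hh (id2 g') ta) (cc g' (cc h h')) (cc g' (id1 z))) by bd.
    rewrite Ir, Ac in H by auto. exact H. }
  assert (K2 : T2 (hh P (id2 h')) (cc (cc g' h) h') (cc (cc g h) h')).
  { eapply T2_hh; eauto; try bd. }
  assert (K3 : T2 (hh (id2 g) ta) (cc (cc g h) h') g).
  { assert (H : T2 (hh (id2 g) ta) (cc g (cc h h')) (cc g (id1 z))) by bd.
    rewrite Ir, Ac in H by auto. exact H. }
  assert (K3' : T2 (hh (id2 g) ta') g (cc (cc g h) h')).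
  { assert (H : T2 (hh (id2 g) ta') (cc g (id1 z)) (cc g (cc h h'))) by bd.
    rewrite Ir, Ac in H by auto. exact H. }
  assert (K4 : T2 (hh (hh al (id2 h)) (id2 h')) (cc (cc g h) h') (cc (cc g' h) h')).
  { eapply T2_hh; eauto; try bd. }
  assert (TK : T2 K g' g) by (unfold K; bd).
  split; [exact TK|].
  assert (Tz : T1 (id1 z) z z) by bd.
  assert (Thh : T1 (cc h h') z z) by bd.
  assert (Tgh : T1 (cc g h) y w) by bd.
  assert (Tgh' : T1 (cc g' h) y w) by bd.
  assert (Tal : T2 (hh al (id2 h)) (cc g h) (cc g' h)) by bd.
  assert (HA1 : hh al (id2 (cc h h')) = hh (hh al (id2 h)) (id2 h')).
  { rewrite <- (hh_id2 HC h h') by bd. rewrite (hh_assoc HC) by bd. reflexivity. }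
  assert (N12 : vv al (hh (id2 g') ta') = vv (hh (id2 g) ta') (hh (hh al (id2 h)) (id2 h'))).
  { pose proof (interchange HC al (id2 g') (id2 (id1 z)) ta') as E1.
    rewrite (vv_idr HC al), (vv_idl HC ta'), (hh_idr HC al) in E1 by bd.
    pose proof (interchange HC (id2 g) al ta' (id2 (cc h h'))) as E2.
    rewrite (vv_idl HC al), (vv_idr HC ta'), HA1 in E2 by bd.
    rewrite <- E1 by bd. apply E2; bd. }
  assert (N56 : vv (hh (id2 g) ta) al = vv (hh (hh al (id2 h)) (id2 h')) (hh (id2 g') ta)).
  { pose proof (interchange HC al (id2 g') (id2 (cc h h')) ta) as E1.
    rewrite (vv_idr HC al), (vv_idl HC ta), HA1 in E1 by bd.
    pose proof (interchange HC (id2 g) al ta (id2 (id1 z))) as E2.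
    rewrite (vv_idl HC al), (vv_idr HC ta), (hh_idr HC al) in E2 by bd.
    rewrite <- E2 by bd. apply E1; bd. }
  assert (N4 : forall k, T1 k y z -> vv (hh (id2 k) ta') (hh (id2 k) ta) = id2 k).
  { intros k Tk. rewrite <- (interchange HC) by bd. rewrite It2, (vv_idl HC) by bd.
    rewrite (hh_id2 HC) by bd. rewrite Ir; auto. }
  assert (N3 : forall Q1 Q2 a b c, T2 Q1 a b -> T2 Q2 b c -> T1 a y w ->
     vv (hh Q1 (id2 h')) (hh Q2 (id2 h')) = hh (vv Q1 Q2) (id2 h')).
  { intros Q1 Q2 a b c T1' T2' Ta'. rewrite <- (interchange HC) by bd.
    rewrite (vv_idl HC) by bd. reflexivity. }
  split.
  - intros EP. unfold K.
    rewrite <- (vv_assoc HC al) by bd. rewrite N12.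
    rewrite (vv_assoc HC (hh (id2 g) ta')) by bd.
    rewrite <- (vv_assoc HC (hh (hh al (id2 h)) (id2 h'))) by bd.
    rewrite (N3 _ _ _ _ _ Tal TP) by bd. rewrite EP.
    rewrite (hh_id2 HC) by bd. rewrite (vv_idl HC) by bd. apply N4; auto.
  - intros EP. unfold K.
    rewrite (vv_assoc HC (hh (id2 g') ta')) by bd.
    rewrite (vv_assoc HC (hh P (id2 h'))) by bd. rewrite N56.
    rewrite <- (vv_assoc HC (hh P (id2 h'))) by bd.
    rewrite (N3 _ _ _ _ _ TP Tal) by bd. rewrite EP.
    rewrite (hh_id2 HC) by bd. rewrite (vv_idl HC) by bd. apply N4; auto.
Qed.
End Whisk.

Section V4.
Context {A : TwoCatData} (HA : is_2cat A).
Notation HD := (HH_is_dblcat HA).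
Notation V := (Vc HD).

Lemma equivV_inv (al : cell A) : @is_equiv V al ->
  is_equiv (s2 al) /\ exists al', isinv al al' (s2 al) (t2 al).
Proof.
  intros [be [p [q [[c [Ec1 [Ec2 Ic]]] [d [Ed1 [Ed2 Id]]]]]]].
  simpl in p, q, Ec1, Ec2, Ed1, Ed2.
  set (g := s2 al) in *. set (g' := t2 al). set (g2 := s2 be) in *. set (g2' := t2 be).
  set (y := s1 g) in *. set (z := t1 g) in *.
  assert (Tg : T1 g y z) by (split; reflexivity).
  assert (Ta : T2 al g g') by (split; reflexivity).
  assert (Tb : T2 be g2 g2') by (split; reflexivity).
  assert (Tg2 : T1 g2 z y) by (split; auto).
  assert (Tg' : T1 g' y z) by (eapply T1_par; eauto).
  assert (Tg2' : T1 g2' z y) by (eapply T1_par; eauto).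
  rewrite (hh_eq _ _ p) in Ec2. rewrite (hh_eq _ _ q) in Ed1.
  assert (TX : T2 (hh al be) (cc g g2) (cc g' g2')) by bd.
  assert (TY : T2 (hh be al) (cc g2 g) (cc g2' g')) by bd.
  destruct (invV_comp HA c Ic) as [s0' [s1' [I0 I1]]].
  destruct (invV_comp HA d Id) as [t0' [t1' [J0 J1]]].
  pose proof (vc_eq c) as Eqc. pose proof (vc_eq d) as Eqd.
  rewrite Ec1, Ec2 in I0, I1, Eqc. rewrite Ed1, Ed2 in J0, J1, Eqd.
  rewrite (ax_id2_s _ HA), (bd_s2 _ _ _ TX) in I0.
  rewrite (ax_id2_t _ HA), (bd_t2 _ _ _ TX) in I1.
  rewrite (ax_id2_s _ HA), (bd_s2 _ _ _ TY) in J0.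
  rewrite (ax_id2_t _ HA), (bd_t2 _ _ _ TY) in J1.
  set (s0 := proj1_sig (sg0 c)) in *. set (s1 := proj1_sig (sg1 c)) in *.
  set (t0 := proj1_sig (sg0 d)) in *. set (t1 := proj1_sig (sg1 d)) in *.
  split.
  - exists g2, p, q. split.
    + exists s0. rewrite (cc_eq _ _ p). pose proof I0 as [[e1 e2] _].
      split; auto. split; auto. eapply isinv_inv2; eauto.
    + exists t0. rewrite (cc_eq _ _ q). pose proof J0 as [[e1 e2] _].
      split; auto. split; auto. eapply isinv_inv2; eauto.
  - pose proof (isinv_T2 _ _ _ _ I0). pose proof (isinv_T2' _ _ _ _ I0).
    pose proof (isinv_T2 _ _ _ _ I1). pose proof (isinv_T2' _ _ _ _ I1).
    assert (EX : hh al be = vv s0' s1).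
    { rewrite (vv_idl HA s1) in Eqc by bd. rewrite <- Eqc.
      rewrite <- (vv_assoc HA) by bd. destruct I0 as [_ [_ [_ ->]]].
      rewrite (vv_idl HA) by bd. reflexivity. }
    assert (IX : isinv (hh al be) (vv s1' s0) (cc g g2) (cc g' g2')).
    { rewrite EX. eapply (isinv_vv HA). apply isinv_sym; exact I0. exact I1. }
    set (Xi := vv s1' s0) in *.
    pose proof (isinv_T2' _ _ _ _ IX) as TXi.
    assert (EX1 : hh al be = vv (hh al (id2 g2)) (hh (id2 g') be)).
    { pose proof (interchange HA al (id2 g') (id2 g2) be) as E.
      rewrite (vv_idr HA al), (vv_idl HA be) in E by bd. apply E; bd. }
    assert (EX2 : hh al be = vv (hh (id2 g) be) (hh al (id2 g2'))).
    { pose proof (interchange HA (id2 g) al be (id2 g2')) as E.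
      rewrite (vv_idl HA al), (vv_idr HA be) in E by bd. apply E; bd. }
    destruct (whisk_inv HA g g' g2 g y z y al t0 t0' (vv (hh (id2 g') be) Xi)
      Tg Ta Tg2 Tg J0 ltac:(bd)) as [TK [R1 _]].
    destruct (whisk_inv HA g g' g2' g' y z y al t1 t1' (vv Xi (hh (id2 g) be))
      Tg Ta Tg2' Tg' J1 ltac:(bd)) as [TK' [_ R2]].
    set (K := vv (hh (id2 g') t0') (vv (hh (vv (hh (id2 g') be) Xi) (id2 g)) (hh (id2 g) t0))) in *.
    set (K' := vv (hh (id2 g') t1') (vv (hh (vv Xi (hh (id2 g) be)) (id2 g')) (hh (id2 g) t1))) in *.
    assert (E1 : vv al K = id2 g).
    { apply R1. rewrite <- (vv_assoc HA) by bd. rewrite <- EX1.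
      destruct IX as [_ [_ [-> _]]]. reflexivity. }
    assert (E2 : vv K' al = id2 g').
    { apply R2. rewrite (vv_assoc HA) by bd. rewrite <- EX2.
      destruct IX as [_ [_ [_ ->]]]. reflexivity. }
    assert (KK : K' = K).
    { transitivity (vv K' (vv al K)).
      - rewrite E1. rewrite (vv_idr HA) by bd. reflexivity.
      - rewrite <- (vv_assoc HA) by bd. rewrite E2. apply (vv_idl HA); bd. }
    exists K. split; [exact Ta|]. split; [exact TK|]. split; [exact E1|].
    rewrite <- KK. exact E2.
Qed.
End V4.

Section Final.
Context {A B : TwoCatData} (HA : is_2cat A) (HB : is_2cat B)
  {F : TwoFunctorData A B} (HF : is_2functor F).
Notation HDA := (HH_is_dblcat HA).
Notation HDB := (HH_is_dblcat HB).
Notation VF := (VFun HDA HDB (HHF_is_dblfunctor HF)).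

Lemma biequiv_V : biequivalence F -> biequivalence VF.
Proof.
  intros [E1 [E2 E3]]. unfold biequivalence. simpl. split; [|split].
  - intros y. destruct (E1 y) as [x [f [e1 [e2 Ef]]]].
    exists x, (id2 f). rewrite (ax_id2_s _ HB). split; auto. split; auto.
    eapply (equivV_of HB (id2 f) (id2 f) f f (F0 F x) y); auto.
    apply (isinv_id HB). split; auto.
  - intros x x' g e1 e2.
    assert (Tk : T1 (s2 g) (F0 F x) (F0 F x')) by (split; auto).
    assert (Tg : T2 g (s2 g) (t2 g)) by (split; auto).
    assert (Tk' : T1 (t2 g) (F0 F x) (F0 F x')) by (eapply T1_par; eauto).
    destruct Tk' as [e1' e2'].
    destruct (E2 x x' (s2 g) e1 e2) as [f0 [a1 [a2 I]]]. apply iso2_T in I.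
    destruct I as [th [thi Ith]].
    destruct (E2 x x' (t2 g) e1' e2') as [f1 [b1 [b2 I']]]. apply iso2_T in I'.
    destruct I' as [th' [thi' Ith']].
    pose proof (isinv_T2 _ _ _ _ Ith). pose proof (isinv_T2' _ _ _ _ Ith).
    pose proof (isinv_T2 _ _ _ _ Ith'). pose proof (isinv_T2' _ _ _ _ Ith').
    assert (Tb0 : T2 (vv (vv th g) thi') (F1 F f0) (F1 F f1)) by bd.
    destruct Tb0 as [eb1 eb2].
    destruct (E3 f0 f1 ltac:(congruence) ltac:(congruence) _ eb1 eb2) as [al [[c1 [c2 c3]] _]].
    exists al. split; [rewrite c1; auto|]. split; [rewrite c1; auto|].
    assert (TFa : T2 (F2 F al) (F1 F f0) (F1 F f1)) by (apply (F_T2 HF); split; auto).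
    assert (E : vv th g = vv (F2 F al) th').
    { rewrite c3. rewrite (vv_assoc HB (vv th g)) by bd.
      destruct Ith' as [_ [_ [_ ->]]]. rewrite (vv_idr HB) by bd. reflexivity. }
    exists (mkV2 HB (F2 F al) g th th' _ _ _ _ TFa Tg H H1 E).
    split; [reflexivity|]. split; [reflexivity|].
    apply (invV_of HB _ thi thi'); simpl.
    + rewrite (bd_s2 _ _ _ TFa). exact Ith.
    + rewrite (bd_t2 _ _ _ TFa). exact Ith'.
  - intros f f' e1 e2 b eb1 eb2.
    assert (Tf : T2 f (s2 f) (t2 f)) by (split; auto).
    assert (Tf' : T2 f' (s2 f') (t2 f')) by (split; auto).
    pose proof (vc_T0 b) as T0. pose proof (vc_T1 b) as T1b. pose proof (vc_eq b) as Eb.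
    rewrite eb1, eb2, (fax_s2 _ HF), (fax_s2 _ HF) in T0.
    rewrite eb1, eb2, (fax_t2 _ HF), (fax_t2 _ HF) in T1b. rewrite eb1, eb2 in Eb.
    set (r0 := proj1_sig (sg0 b)) in *. set (r1 := proj1_sig (sg1 b)) in *.
    assert (p1 : s1 (t2 f) = s1 (t2 f')) by (rewrite <- !(ax_par_s _ HA); auto).
    assert (p2 : t1 (t2 f) = t1 (t2 f')) by (rewrite <- !(ax_par_t _ HA); auto).
    assert (p3 : s1 (s2 f) = s1 (t2 f')) by (rewrite <- (ax_par_s _ HA); auto).
    assert (p4 : t1 (s2 f) = t1 (t2 f')) by (rewrite <- (ax_par_t _ HA); auto).
    destruct T0 as [q1 q2]. destruct T1b as [q3 q4].
    destruct (E3 _ _ e1 e2 r0 q1 q2) as [t0 [[c1 [c2 c3]] U0]].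
    destruct (E3 _ _ p1 p2 r1 q3 q4) as [t1 [[d1 [d2 d3]] U1]].
    assert (Tt0 : T2 t0 (s2 f) (s2 f')) by (split; auto).
    assert (Tt1 : T2 t1 (t2 f) (t2 f')) by (split; auto).
    assert (E : vv t0 f' = vv f t1).
    { assert (Tw : T2 (vv r0 (F2 F f')) (F1 F (s2 f)) (F1 F (t2 f'))).
      { apply (T2_vv HB _ _ _ (F1 F (s2 f'))); [split; auto|]. apply (F_T2 HF); auto. }
      destruct Tw as [w1 w2].
      destruct (E3 _ _ p3 p4 _ w1 w2) as [w [_ U]].
      transitivity w; [symmetry|]; apply U; (split; [|split]).
      - apply (bd_s2 _ _ _ (T2_vv HA _ _ _ _ _ Tt0 Tf')).
      - apply (bd_t2 _ _ _ (T2_vv HA _ _ _ _ _ Tt0 Tf')).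
      - rewrite (F_vv HF) by bd. rewrite c3. reflexivity.
      - apply (bd_s2 _ _ _ (T2_vv HA _ _ _ _ _ Tf Tt1)).
      - apply (bd_t2 _ _ _ (T2_vv HA _ _ _ _ _ Tf Tt1)).
      - rewrite (F_vv HF) by bd. rewrite d3. symmetry. exact Eb. }
    exists (mkV2 HA f f' t0 t1 _ _ _ _ Tf Tf' Tt0 Tt1 E). split.
    + split; [reflexivity|]. split; [reflexivity|].
      apply vcell_ext; simpl; auto.
    + intros a' [h1 [h2 h3]].
      pose proof (f_equal (fun e => proj1_sig (sg0 e)) h3) as k0.
      pose proof (f_equal (fun e => proj1_sig (sg1 e)) h3) as k1. simpl in k0, k1.
      pose proof (vc_T0 a') as V0. pose proof (vc_T1 a') as V1.
      rewrite h1, h2 in V0, V1. destruct V0, V1.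
      apply vcell_ext; simpl; auto.
Qed.

Lemma fib_V : lack_fibration F -> lack_fibration VF.
Proof.
  intros [E1 E2]. unfold lack_fibration. simpl. split.
  - intros c b eb Eb.
    destruct (equivV_inv HB b Eb) as [Eq [b' Ib]].
    destruct (E1 c (s2 b) eb Eq) as [f [f1 [f2 f3]]].
    pose proof (isinv_T2 _ _ _ _ Ib) as Tb. pose proof (isinv_T2' _ _ _ _ Ib) as Tb'.
    assert (e' : t2 b' = F1 F f) by (rewrite f3; apply (bd_t2 _ _ _ Tb')).
    destruct (E2 f b' e' (isinv_inv2 _ _ _ _ (isinv_sym _ _ _ _ Ib))) as [al' [g1 [g2 g3]]].
    { destruct (isinv_ex al' (s2 al') f ltac:(split; auto) g2) as [al Ia].
      apply isinv_sym in Ia.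
      exists al. pose proof (isinv_T2 _ _ _ _ Ia) as Ta.
      split; [rewrite (bd_s2 _ _ _ Ta); auto|]. split.
      * eapply (equivV_of HA al al' f (s2 al') (s1 f) c Ia); auto. split; auto.
      * pose proof (F_isinv HF _ _ _ _ Ia) as FI.
        rewrite g3, f3 in FI. rewrite <- (fax_s2 _ HF), g3 in FI.
        rewrite (bd_s2 _ _ _ Tb') in FI.
        apply isinv_sym in FI. apply isinv_sym in Ib.
        eapply (isinv_uniq HB); eauto. }
  - intros c be ebe Ibe.
    destruct (invV_comp HB be Ibe) as [s0' [s1' [I0 I1]]].
    pose proof (vc_eq be) as Eb. rewrite ebe in I0, I1, Eb.
    rewrite (fax_s2 _ HF) in I0. rewrite (fax_t2 _ HF) in I1.
    set (r0 := proj1_sig (sg0 be)) in *. set (r1 := proj1_sig (sg1 be)) in *.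
    destruct (E2 (s2 c) r0 (proj2 (isinv_T2 _ _ _ _ I0)) (isinv_inv2 _ _ _ _ I0))
      as [t0 [h1 [h2 h3]]].
    destruct (E2 (t2 c) r1 (proj2 (isinv_T2 _ _ _ _ I1)) (isinv_inv2 _ _ _ _ I1))
      as [t1 [k1 [k2 k3]]].
    destruct (isinv_ex t0 (s2 t0) (s2 c) ltac:(split; auto) h2) as [t0i J0].
    destruct (isinv_ex t1 (s2 t1) (t2 c) ltac:(split; auto) k2) as [t1i J1].
    pose proof (isinv_T2 _ _ _ _ J0). pose proof (isinv_T2' _ _ _ _ J0).
    pose proof (isinv_T2 _ _ _ _ J1). pose proof (isinv_T2' _ _ _ _ J1).
    assert (Tc : T2 c (s2 c) (t2 c)) by (split; auto).
    assert (Ta0 : T2 (vv (vv t0 c) t1i) (s2 t0) (s2 t1)) by bd.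
    assert (E : vv t0 c = vv (vv (vv t0 c) t1i) t1).
    { rewrite (vv_assoc HA _ t1i) by bd. destruct J1 as [_ [_ [_ ->]]].
      rewrite (vv_idr HA) by bd. reflexivity. }
    exists (mkV2 HA _ c t0 t1 _ _ _ _ Ta0 Tc H H1 E).
    split; [reflexivity|]. split.
    + apply (invV_of HA _ t0i t1i); simpl.
      * rewrite (bd_s2 _ _ _ Ta0). exact J0.
      * rewrite (bd_t2 _ _ _ Ta0). exact J1.
    + pose proof (F_isinv HF _ _ _ _ J1) as FJ. rewrite k3 in FJ.
      rewrite <- (fax_s2 _ HF), k3 in FJ.
      pose proof (isinv_T2 _ _ _ _ I1) as TI1. pose proof (isinv_T2' _ _ _ _ I1) as TI1'.
      rewrite (bd_s2 _ _ _ TI1) in FJ.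
      assert (Fi : F2 F t1i = s1') by (eapply (isinv_uniq HB); eauto).
      pose proof (isinv_T2 _ _ _ _ I0) as TI0.
      assert (TF : T2 (F2 F c) (F1 F (s2 c)) (F1 F (t2 c))) by (apply (F_T2 HF); auto).
      apply vcell_ext; simpl; auto.
      rewrite (F_vv HF) by bd. rewrite (F_vv HF) by bd. rewrite h3, Fi.
      assert (Tv : T2 (vsrc be) (s2 (vsrc be)) (t2 (vsrc be))) by (split; auto).
      rewrite Eb. rewrite (vv_assoc HB) by bd.
      destruct I1 as [_ [_ [-> _]]]. apply (vv_idr HB). reflexivity.
Qed.
End Final.

Theorem theorem6p7 (A B : TwoCatData) (HA : is_2cat A) (HB : is_2cat B)
  (F : TwoFunctorData A B) (HF : is_2functor F) :
  (biequivalence F <->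
     double_biequivalence (HH_is_dblcat HA) (HH_is_dblcat HB) (HHF_is_dblfunctor HF)) /\
  (lack_fibration F <->
     double_fibration (HH_is_dblcat HA) (HH_is_dblcat HB) (HHF_is_dblfunctor HF)).
Proof.
  split; split.
  - intros H. split; [apply (biequiv_H HA HB HF); auto | apply (biequiv_V HA HB HF); auto].
  - intros [H _]. apply (biequiv_H HA HB HF); auto.
  - intros H. split; [apply (fib_H HA HB HF); auto | apply (fib_V HA HB HF); auto].
  - intros [H _]. apply (fib_H HA HB HF); auto.
Qed.
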